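(* Let $i,\ell\in\{0,\dots,r-2\}$, $k\in\mathbb Z$, and $P=\mathbb C^H_{kr}\otimes P_\ell$. Then any nonzero morphism $P_i\to P$ in $\mathcal C$ is equal to one of $$\lambda I_i+\mu x_i,\qquad \lambda\alpha_i^+,\qquad \lambda\alpha_i^-,$$ for some $\lambda,\mu\in\mathbb C$. Here the morphisms are uniquely determined by: - $I_i:P_i\to P_i$, $h_i\mapsto h_i$; - $x_i:P_i\to P_i$, $h_i\mapsto s_i$; - $\alpha_i^+:P_i\to\mathbb C^H_r\otimes P_{r-2-i}$, $h_i\mapsto 1\otimes L_{i-r}$; - $\alpha_i^-:P_i\to\mathbb C^H_{-r}\otimes P_{r-2-i}$, $h_i\mapsto [i]!^{-2}\,1\otimes R_{i+r}$.
   Context: Fix a positive integer $r$. Set $q=e^{\pi\sqrt{-1}/r}$, $q^x=e^{\pi\sqrt{-1}x/r}$, $\{x\}=q^x-q^{-x}$, $[x]=\{x\}/\{1\}$, $[n]!=[n][n-1]\cdots[1]$. $\overline U=\overline U_q^H\mathfrak{sl}(2)$ is the Hopf algebra over $\mathbb C$ generated by $E,F,K,K^{-1},H$ with: - relations $KK^{-1}=K^{-1}K=1$, $KEK^{-1}=q^2E$, $KFK^{-1}=q^{-2}F$, $EF-FE=\frac{K-K^{-1}}{q-q^{-1}}$, $HK=KH$, $[H,E]=2E$, $[H,F]=-2F$, $E^r=F^r=0$; - coproduct $\Delta(E)=1\otimes E+E\otimes K$, $\Delta(F)=K^{-1}\otimes F+F\otimes1$, $\Delta(K)=K\otimes K$,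 $\Delta(H)=H\otimes1+1\otimes H$. $\mathcal C$ is the category of finite-dimensional weight modules ($H$ diagonalizable, $K=q^\lambda$ on weight-$\lambda$ vectors). $\mathbb C^H_{kr}$ is the one-dimensional module with $E=F=0$ and $H=kr$. Definition of $P_i$, for $i\in\{0,\dots,r-2\}$ (write $j=r-2-i$ and $\gamma_{n,k}=[k][n-k+1]$). $P_i$ has basis $h_m$ ($m=i,i-2,\dots,-i$), $s_m$ ($m=i,\dots,-i$), $R_m$ ($m=r+j,\dots,r-j$), $L_m$ ($m=j-r,\dots,-j-r$), each of weight $m$, with: - $Fh_m=h_{m-2}$ ($m>-i$), $Fh_{-i}=L_{j-r}$; - $Fs_m=s_{m-2}$ ($m>-i$), $Fs_{-i}=0$; - $FL_m=L_{m-2}$ ($m>-j-r$), $FL_{-j-r}=0$; - $FR_{r-j}=s_i$, $FR_{r-j+2k}=-\gamma_{j,k}R_{r-j+2k-2}$ ($1\le k\le j$); - $Eh_i=R_{r-j}$, $Eh_{i-2k}=\gamma_{i,k}h_{i-2k+2}+s_{i-2k+2}$ ($1\le k\le i$); - $Es_i=0$, $Es_{i-2k}=\gamma_{i,k}s_{i-2k+2}$; - $ER_m=R_{m+2}$ ($m<r+j$), $ER_{r+j}=0$; - $EL_{j-r}=s_{-i}$, $EL_{j-2k-r}=-\gamma_{j,k}L_{j-2k-r+2}$ ($1\le k\le j$). In $P_{r-2-i}$, the vectors $L_{i-r}$ and $R_{i+r}$ are the basis vectors of those weights. *)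

(* Defs.v *)
From HB Require Import structures.
From mathcomp Require Import all_boot all_order all_algebra.
From mathcomp Require Import complex.
From mathcomp Require Import reals trigo.
From Stdlib Require Import ClassicalEpsilon.

Unset Printing Implicit Defensive.

Import Order.TTheory GRing.Theory Num.Theory.
Local Open Scope ring_scope.

Section Defs.
Variable R : realType.
Local Notation C := (complex R).

Definition qq (r : nat) : C := Complex (cos (pi / r%:R)) (sin (pi / r%:R)).

Definition qpow (r : nat) (x : int) : C := qq r ^ x.
Definition qcurly (r : nat) (x : int) : C := qpow r x - qpow r (- x).
Definition qbr (r : nat) (x : int) : C := qcurly r x / qcurly r 1.
Definition qfact (r : nat) (n : nat) : C := \prod_(1 <= m < n.+1) qbr r m%:Z.
Definition gam (r n k : nat) : C := qbr r k%:Z * qbr r (n%:Z - k%:Z + 1).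

(* A finite-dimensional module over U = U_q^H sl(2), given in a fixed basis
   (column convention: the action of X on column vectors v is  X *m v),
   recorded by the matrices of the generators E, F, H, K, K^{-1}. *)
Record umod (n : nat) := UMod {
  actE : 'M[C]_n; actF : 'M[C]_n; actH : 'M[C]_n;
  actK : 'M[C]_n; actKi : 'M[C]_n }.
Arguments actE {n}. Arguments actF {n}. Arguments actH {n}.
Arguments actK {n}. Arguments actKi {n}. Arguments UMod {n}.

Definition is_mor {n : nat} (V W : umod n) (f : 'M[C]_n) : Prop :=
  [/\ f *m actE V = actE W *m f, f *m actF V = actF W *m f,
      f *m actH V = actH W *m f, f *m actK V = actK W *m f &
      f *m actKi V = actKi W *m f].

(* Basis of P_i (dimension 2r), with j = r-2-i, positions:
     h_{i-2a}       at a             (0 <= a <= i)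
     s_{i-2a}       at i+1+a         (0 <= a <= i)
     R_{r-j+2a}     at 2i+2+a        (0 <= a <= j)
     L_{j-r-2a}     at 2i+j+3+a      (0 <= a <= j)                          *)
Definition hI (i a : nat) : nat := a.
Definition sI (i a : nat) : nat := (i + 1 + a)%N.
Definition RI (i a : nat) : nat := (2 * i + 2 + a)%N.
Definition LI (r i a : nat) : nat := (2 * i + (r - 2 - i) + 3 + a)%N.

Definition dlt (p n : nat) : C := (p == n)%:R.

Definition coefE (r i : nat) (p c : nat) : C :=
  let j := (r - 2 - i)%N in
  if (c < i + 1)%N then
    let a := c in
    if a == 0%N then dlt p (RI i 0)
    else gam r i a * dlt p (hI i a.-1) + dlt p (sI i a.-1)
  else if (c < 2 * i + 2)%N then
    let a := (c - (i + 1))%N in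
    if a == 0%N then 0 else gam r i a * dlt p (sI i a.-1)
  else if (c < 2 * i + 2 + j + 1)%N then
    let a := (c - (2 * i + 2))%N in
    if (a < j)%N then dlt p (RI i a.+1) else 0
  else
    let a := (c - (2 * i + j + 3))%N in
    if a == 0%N then dlt p (sI i i)
    else - gam r j a * dlt p (LI r i a.-1).

Definition coefF (r i : nat) (p c : nat) : C :=
  let j := (r - 2 - i)%N in
  if (c < i + 1)%N then
    let a := c in
    if (a < i)%N then dlt p (hI i a.+1) else dlt p (LI r i 0)
  else if (c < 2 * i + 2)%N then
    let a := (c - (i + 1))%N in
    if (a < i)%N then dlt p (sI i a.+1) else 0
  else if (c < 2 * i + 2 + j + 1)%N then
    let a := (c - (2 * i + 2))%N in
    if a == 0%N then dlt p (sI i 0)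
    else - gam r j a * dlt p (RI i a.-1)
  else
    let a := (c - (2 * i + j + 3))%N in
    if (a < j)%N then dlt p (LI r i a.+1) else 0.

Definition wt (r i : nat) (c : nat) : int :=
  let j := (r - 2 - i)%N in
  if (c < i + 1)%N then i%:Z - 2 * c%:Z
  else if (c < 2 * i + 2)%N then i%:Z - 2 * (c - (i + 1))%N%:Z
  else if (c < 2 * i + 2 + j + 1)%N then
    r%:Z - j%:Z + 2 * (c - (2 * i + 2))%N%:Z
  else j%:Z - r%:Z - 2 * (c - (2 * i + j + 3))%N%:Z.

Definition Pmod (r i : nat) : umod (r.*2) :=
  UMod (\matrix_(p, c) coefE r i p c) (\matrix_(p, c) coefF r i p c)
       (\matrix_(p, c) ((p == c)%:R * (wt r i c)%:~R))
       (\matrix_(p, c) ((p == c)%:R * qpow r (wt r i c)))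
       (\matrix_(p, c) ((p == c)%:R * qpow r (- wt r i c))).

(* C^H_{kr} (x) V, identified with V via 1 (x) v <-> v, with the action
   given by the coproduct: E = 0, F = 0, H = kr, K = q^{kr} on C^H_{kr}:
     Delta(E) = 1(x)E + E(x)K       acts as  E
     Delta(F) = K^{-1}(x)F + F(x)1  acts as  q^{-kr} F
     Delta(H) = H(x)1 + 1(x)H       acts as  kr + H
     Delta(K^{+-1}) = K^{+-1}(x)K^{+-1}  acts as  q^{+-kr} K^{+-1}          *)
Definition tensC (r : nat) (k : int) {n : nat} (V : umod n) : umod n :=
  UMod (actE V) (qpow r (- (k * r%:Z)) *: actF V)
       ((k * r%:Z)%:~R%:M + actH V)
       (qpow r (k * r%:Z) *: actK V) (qpow r (- (k * r%:Z)) *: actKi V).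

Definition bvec (n c : nat) : 'cV[C]_n := \col_p (((p : nat) == c)%:R).

Definition mor_det (r i : nat) (W : umod (r.*2)) (v : 'cV[C]_(r.*2))
  : 'M[C]_(r.*2) :=
  epsilon (inhabits 0)
    (fun g => is_mor (Pmod r i) W g /\ g *m bvec (r.*2) (hI i 0) = v).

Definition Imor (r i : nat) := mor_det r i (tensC r 0 (Pmod r i)) (bvec _ (hI i 0)).
Definition xmor (r i : nat) := mor_det r i (tensC r 0 (Pmod r i)) (bvec _ (sI i 0)).
(* alpha_i^+ : P_i -> C^H_r (x) P_{r-2-i}, h_i |-> 1 (x) L_{i-r} *)
Definition alpha_plus (r i : nat) :=
  mor_det r i (tensC r 1 (Pmod r (r - 2 - i)))
          (bvec _ (LI r (r - 2 - i) 0)).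
(* alpha_i^- : P_i -> C^H_{-r} (x) P_{r-2-i}, h_i |-> [i]!^{-2} 1 (x) R_{i+r} *)
Definition alpha_minus (r i : nat) :=
  mor_det r i (tensC r (-1) (Pmod r (r - 2 - i)))
          ((qfact r i)^-2 *: bvec _ (RI (r - 2 - i) i)).

End Defs.

(* Main.v *)
Require Import Defs.
From HB Require Import structures.
From mathcomp Require Import all_boot all_order all_algebra.
From mathcomp Require Import complex.
From mathcomp Require Import reals trigo.
From mathcomp Require Import zify ring lra.
From Stdlib Require Import ClassicalEpsilon.
Import Order.TTheory GRing.Theory Num.Theory.
Local Open Scope ring_scope.

Section S. Variable R : realType.
Local Notation C := (complex R).

Lemma mulcE (a b c d : R) : (Complex a b) * (Complex c d) = Complex (a*c - b*d) (a*d + b*c) :> C.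
Proof. by []. Qed.

Lemma qq_pow r n : qq R r ^+ n = Complex (cos (n%:R * (pi / r%:R))) (sin (n%:R * (pi/r%:R))).
Proof.
set t := pi / r%:R.
have qE : qq R r = Complex (cos t) (sin t) by [].
elim: n => [|n IH]; first by rewrite expr0 mul0r cos0 sin0.
rewrite exprS IH qE mulcE mulrSr mulrDl mul1r cosD sinD; congr Complex; lra.
Qed.

Lemma sin_pos r n : (0 < n)%N -> (n < r)%N -> 0 < sin (n%:R * (pi / r%:R) : R).
Proof.
move=> h0 h1; apply: sin_gt0_pi; apply/andP; split.
  by rewrite mulr_gt0 // ?ltr0n // divr_gt0 ?pi_gt0 // ltr0n; lia.
rewrite mulrCA gtr_pMr ?pi_gt0 // ltr_pdivrMr ?ltr0n ?mul1r ?ltr_nat //; lia.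
Qed.

Lemma qcurly_neq0 r (n : nat) : (0 < n)%N -> (n < r)%N -> qcurly R r n != 0.
Proof.
move=> h0 h1; rewrite /qcurly /qpow -exprnN -exprnP.
set w := qq R r ^+ n.
have wE := qq_pow r n; rewrite -/w in wE.
have hs := @sin_pos r n h0 h1.
have w0 : w != 0 by rewrite wE eq_complex /= negb_and (gt_eqF hs) orbT.
rewrite subr_eq0; apply/negP=> /eqP e.
have : w * w = 1 by rewrite {2}e mulfV.
rewrite wE mulcE => /eqP; rewrite eq_complex /= => /andP [/eqP e1 /eqP e2].
have : cos (n%:R * (pi / r%:R)) = 0 :> R.
  have e3 : cos (n%:R * (pi / r%:R)) * sin (n%:R * (pi / r%:R)) = 0 :> R.
    by move: e2; rewrite [sin _ * cos _]mulrC; lra.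
  by move/eqP: e3; rewrite mulf_eq0 (gt_eqF hs) orbF => /eqP.
move=> c0; move: e1; rewrite c0 mul0r sub0r => e1.
have : 0 < sin (n%:R * (pi / r%:R)) * sin (n%:R * (pi / r%:R)) :> R by apply: mulr_gt0.
rewrite -[X in _ < X]opprK e1; lra.
Qed.

Lemma qbr_neq0 r (n : nat) : (0 < n)%N -> (n < r)%N -> qbr R r n != 0.
Proof.
move=> h0 h1; rewrite /qbr mulf_neq0 // ?invr_eq0 (@qcurly_neq0 r) //; lia.
Qed.

Lemma gam_neq0 r n a : (0 < a)%N -> (a <= n)%N -> (n + 2 <= r)%N -> gam R r n a != 0.
Proof.
move=> h1 h2 h3; rewrite /gam mulf_neq0 ?(@qbr_neq0 r) //; try lia.
have -> : (n%:Z - a%:Z + 1 = (n - a + 1)%N%:Z)%R by lia.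
rewrite (@qbr_neq0 r) //; lia.
Qed.

Lemma qfact_neq0 r n : (n < r)%N -> qfact R r n != 0.
Proof.
elim: n => [|n IH] h; first by rewrite /qfact big_geq // oner_neq0.
rewrite /qfact big_nat_recr //= mulf_neq0 //; first by apply: IH; lia.
rewrite (@qbr_neq0 r) //; lia.
Qed.

Lemma qq_neq0 r : (1 < r)%N -> qq R r != 0.
Proof.
move=> h; have := qq_pow r 1; rewrite expr1 => ->.
rewrite eq_complex /= negb_and (gt_eqF (@sin_pos r 1 _ h)) ?orbT //.
Qed.

Lemma qpow_neq0 r x : (1 < r)%N -> qpow R r x != 0.
Proof. by move=> h; rewrite /qpow expfz_neq0 // qq_neq0. Qed.

Lemma mx_bvec n (M : nat -> nat -> C) c : (c < n)%N ->
  (\matrix_(p < n, q < n) M p q) *m bvec R n c = \col_(p < n) M p c.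
Proof.
move=> h; apply/matrixP => p q; rewrite !mxE (bigD1 (Ordinal h)) //= !mxE eqxx mulr1.
rewrite big1 ?addr0 // => j /negP hj; rewrite !mxE.
case: eqP => [e|]; last by rewrite mulr0.
by exfalso; apply: hj; apply/eqP/val_inj.
Qed.


Ltac brs := repeat (case: ifP => /= ?; try (exfalso; lia)).
Ltac fin := first [ reflexivity | lia | (f_equal; fin) ].

Section Act.
Variables (r l : nat).
Hypothesis hl : (l + 2 <= r)%N.
Local Notation b := (bvec R r.*2).
Local Notation E := (@actE R _ (Pmod R r l)).
Local Notation F := (@actF R _ (Pmod R r l)).
Local Notation j := (r - 2 - l)%N.

Lemma Eb c : (c < r.*2)%N -> E *m b c = \col_p Defs.coefE R r l p c.
Proof. by move=> h; rewrite /Pmod /= mx_bvec. Qed.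
Lemma Fb c : (c < r.*2)%N -> F *m b c = \col_p coefF R r l p c.
Proof. by move=> h; rewrite /Pmod /= mx_bvec. Qed.

Ltac act := (rewrite ?Eb ?Fb; last (rewrite /hI /sI /RI /LI; lia));
  apply/matrixP => p q; rewrite !mxE /Defs.coefE /coefF /dlt /hI /sI /RI /LI /=; brs;
  rewrite ?mulr0 ?mul0r ?addr0 ?add0r ?mulr1 ?mul1r ?mulNr; try fin.

Lemma F_h a : (a < l)%N -> F *m b (hI l a) = b (hI l a.+1).
Proof. move=> h; act. Qed.
Lemma F_hl : F *m b (hI l l) = b (LI r l 0).
Proof. act. Qed.
Lemma F_s a : (a < l)%N -> F *m b (sI l a) = b (sI l a.+1).
Proof. move=> h; act. Qed.
Lemma F_sl : F *m b (sI l l) = 0.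
Proof. act. Qed.
Lemma F_L a : (a < j)%N -> F *m b (LI r l a) = b (LI r l a.+1).
Proof. move=> h; act. Qed.
Lemma E_h0 : E *m b (hI l 0) = b (RI l 0).
Proof. act. Qed.
Lemma E_h a : (0 < a <= l)%N -> E *m b (hI l a) = gam R r l a *: b (hI l a.-1) + b (sI l a.-1).
Proof. move=> /andP[h1 h2]; act. Qed.
Lemma E_s0 : E *m b (sI l 0) = 0.
Proof. act. Qed.
Lemma E_s a : (0 < a <= l)%N -> E *m b (sI l a) = gam R r l a *: b (sI l a.-1).
Proof. move=> /andP[h1 h2]; act. Qed.
Lemma E_R a : (a < j)%N -> E *m b (RI l a) = b (RI l a.+1).
Proof. move=> h; act. Qed.
Lemma E_Rj : E *m b (RI l j) = 0.
Proof. act. Qed.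
Lemma F_R0 : F *m b (RI l 0) = b (sI l 0).
Proof. act. Qed.
Lemma F_R a : (0 < a <= j)%N -> F *m b (RI l a) = - gam R r j a *: b (RI l a.-1).
Proof. move=> /andP[h1 h2]; act. Qed.
Lemma E_L0 : E *m b (LI r l 0) = b (sI l l).
Proof. act. Qed.
Lemma E_L a : (0 < a <= j)%N -> E *m b (LI r l a) = - gam R r j a *: b (LI r l a.-1).
Proof. move=> /andP[h1 h2]; act. Qed.

Lemma H_b c : (c < r.*2)%N -> @actH R _ (Pmod R r l) *m b c = (wt r l c)%:~R *: b c.
Proof.
move=> h; apply/matrixP => p q; rewrite !mxE (bigD1 (Ordinal h)) //= !mxE eqxx mulr1.
rewrite big1 ?addr0; last first.
  move=> x /negP hx; rewrite !mxE; case: (x =P c :> nat) => [e|]; last by rewrite mulr0.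
  by exfalso; apply: hx; apply/eqP/val_inj; rewrite /= e.
rewrite mulrC; case: (eqVneq p (Ordinal h)) => [->|ne]; first by rewrite !eqxx.
case: eqP => [e|_]; last by rewrite !mulr0.
by case/eqP: ne; apply/val_inj; rewrite /= e.
Qed.
End Act.


Lemma iter_lin n (M : 'M[C]_n) m (a : C) (w : 'cV[C]_n) :
  iter m (fun x : 'cV[C]_n => M *m x) (a *: w) = a *: iter m (fun x : 'cV[C]_n => M *m x) w.
Proof. by elim: m => //= m ->; rewrite scalemxAr. Qed.

Lemma iter_lin0 n (M : 'M[C]_n) m : iter m (fun x : 'cV[C]_n => M *m x) 0 = 0.
Proof. by elim: m => //= m ->; rewrite mulmx0. Qed.

Lemma iter_linD n (M : 'M[C]_n) m (w1 w2 : 'cV[C]_n) :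
  iter m (fun x : 'cV[C]_n => M *m x) (w1 + w2) = iter m (fun x : 'cV[C]_n => M *m x) w1 + iter m (fun x : 'cV[C]_n => M *m x) w2.
Proof. by elim: m => //= m ->; rewrite mulmxDr. Qed.

Lemma bvec_col n (g : 'M[C]_n) (c : 'I_n) p : (g *m bvec R n c) p 0 = g p c.
Proof.
rewrite !mxE (bigD1 c) //= !mxE eqxx mulr1 big1 ?addr0 // => x hx; rewrite !mxE.
by case: eqP => [e|]; [case/eqP: hx; apply/val_inj | rewrite mulr0].
Qed.

Section Mor.
Variables (r i : nat).
Hypothesis hi : (i + 2 <= r)%N.
Variable W : umod R r.*2.
Variable f : 'M[C]_(r.*2).
Hypothesis hf : is_mor R (Pmod R r i) W f.
Local Notation b := (bvec R r.*2).
Local Notation EW := (@actE R _ W).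
Local Notation FW := (@actF R _ W).
Local Notation j := (r - 2 - i)%N.
Local Notation v := (f *m b (hI i 0)).
Local Notation itE n w := (iter n (fun x : 'cV[C]_(r.*2) => EW *m x) w).
Local Notation itF n w := (iter n (fun x : 'cV[C]_(r.*2) => FW *m x) w).

Lemma morE (x : 'cV[C]_(r.*2)) : f *m (@actE R _ (Pmod R r i) *m x) = EW *m (f *m x).
Proof. by case: hf => e _ _ _ _; rewrite mulmxA e mulmxA. Qed.
Lemma morF (x : 'cV[C]_(r.*2)) : f *m (@actF R _ (Pmod R r i) *m x) = FW *m (f *m x).
Proof. by case: hf => _ e _ _ _; rewrite mulmxA e mulmxA. Qed.

Lemma f_h a : (a <= i)%N -> f *m b (hI i a) = itF a v.
Proof.
elim: a => // a IH h.
by rewrite -(@F_h r i hi a) // morF IH //=; lia.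
Qed.

Lemma f_L a : (a <= j)%N -> f *m b (LI r i a) = itF (a + i.+1) v.
Proof.
elim: a => [|a IH] h.
  by rewrite -(@F_hl r i hi) morF f_h.
by rewrite -(@F_L r i hi a) // morF IH //=; lia.
Qed.

Lemma f_R a : (a <= j)%N -> f *m b (RI i a) = itE a.+1 v.
Proof.
elim: a => [|a IH] h; first by rewrite -(@E_h0 r i hi) morE.
by rewrite -(@E_R r i hi a) // morE IH //=; lia.
Qed.

Lemma f_s a : (a <= i)%N -> f *m b (sI i a) = itF a (FW *m (EW *m v)).
Proof.
elim: a => [|a IH] h.
  by rewrite -(@F_R0 r i hi) morF f_R.
by rewrite -(@F_s r i hi a) // morF IH //=; lia.
Qed.

Lemma rel1 : itE j.+2 v = 0.
Proof. by rewrite iterS -f_R // -morE (@E_Rj r i hi) mulmx0. Qed.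

Lemma rel2 : EW *m (FW *m (EW *m v)) = 0.
Proof. by have := @f_s 0 (leq0n i) => /= <-; rewrite -morE (@E_s0 r i hi) mulmx0. Qed.

Lemma rel3 : itF i.+2 (EW *m v) = 0.
Proof. by rewrite iterS iterSr -f_s // -morF (@F_sl r i hi) mulmx0. Qed.

Lemma rel4 : FW *m (EW *m itF i.+1 v) = 0.
Proof.
have := @f_L 0 (leq0n j); rewrite add0n => <-.
by rewrite -morE (@E_L0 r i hi) -morF (@F_sl r i hi) mulmx0.
Qed.

Lemma uniq_mor : v = 0 -> f = 0.
Proof.
move=> v0; apply/matrixP => p q; rewrite mxE -bvec_col.
have hq := ltn_ord q.
suff -> : f *m b q = 0 by rewrite mxE.
have [h1|h1] := ltnP q (i + 1).
  have h' : (q <= i)%N by lia.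
  by have := @f_h q h'; rewrite /hI v0 iter_lin0.
have [h2|h2] := ltnP q (2 * i + 2).
  have h' : (q - (i + 1) <= i)%N by lia.
  have := @f_s (q - (i+1)) h'; rewrite /sI v0 !mulmx0 iter_lin0.
  by have -> : (i + 1 + (q - (i + 1)))%N = q by lia.
have [h3|h3] := ltnP q (2 * i + 2 + j + 1).
  have h' : (q - (2 * i + 2) <= j)%N by lia.
  have := @f_R (q - (2 * i + 2)) h'; rewrite /RI v0 iter_lin0.
  by have -> : (2 * i + 2 + (q - (2 * i + 2)))%N = q by lia.
have hq2 : (q < r.*2)%N by [].
have h' : (q - (2 * i + j + 3) <= j)%N by lia.
have := @f_L (q - (2 * i + j + 3)) h'; rewrite /LI v0 iter_lin0.
by have -> : (2 * i + j + 3 + (q - (2 * i + j + 3)))%N = q by lia.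
Qed.

End Mor.


Lemma kr_cases (k : int) (r : nat) : k = 0 \/ k = 1 \/ k = -1 \/ (2 * r%:Z <= k * r%:Z) \/ (k * r%:Z <= - 2 * r%:Z).
Proof.
have [h|h] : (k <= -2 \/ 2 <= k) \/ (-1 <= k <= 1) by lia.
  case: h => h; right; right; right; [right|left]; nia.
lia.
Qed.

Lemma bvec1_eq0 n p (d : C) : (p < n)%N -> d *: bvec R n p = 0 -> d = 0.
Proof.
by move=> h /matrixP /(_ (Ordinal h) 0); rewrite !mxE /= eqxx mulr1.
Qed.

Section Chains.
Variables (r l : nat).
Hypothesis hl : (l + 2 <= r)%N.
Local Notation b := (bvec R r.*2).
Local Notation E := (@actE R _ (Pmod R r l)).
Local Notation F := (@actF R _ (Pmod R r l)).
Local Notation j := (r - 2 - l)%N.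
Local Notation itE n w := (iter n (fun x : 'cV[C]_(r.*2) => E *m x) w).
Local Notation itF n w := (iter n (fun x : 'cV[C]_(r.*2) => F *m x) w).

Lemma iterF_s c m : (c + m <= l)%N -> itF m (b (sI l c)) = b (sI l (c + m)).
Proof.
elim: m => [|m IH] h; first by rewrite addn0.
by rewrite iterS IH ?(@F_s r l hl) ?addnS //; lia.
Qed.

Lemma iterF_L c m : (c + m <= j)%N -> itF m (b (LI r l c)) = b (LI r l (c + m)).
Proof.
elim: m => [|m IH] h; first by rewrite addn0.
by rewrite iterS IH ?(@F_L r l hl) ?addnS //; lia.
Qed.

Lemma iterE_s c m : (m <= c <= l)%N -> exists2 d, d != 0 & itE m (b (sI l c)) = d *: b (sI l (c - m)).
Proof.
elim: m => [|m IH] /andP[h1 h2]; first by exists 1; rewrite ?oner_neq0 // scale1r subn0.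
have hm : (m <= c <= l)%N by apply/andP; lia.
have [d d0 e] := IH hm.
exists (d * gam R r l (c - m.+1).+1); first by rewrite mulf_neq0 // gam_neq0 //; lia.
rewrite iterS e (_ : (c - m)%N = (c - m.+1).+1); last lia.
by rewrite -scalemxAr (@E_s r l hl) ?scalerA //; apply/andP; lia.
Qed.

Lemma iterE_L c m : (m <= c <= j)%N -> exists2 d, d != 0 & itE m (b (LI r l c)) = d *: b (LI r l (c - m)).
Proof.
elim: m => [|m IH] /andP[h1 h2]; first by exists 1; rewrite ?oner_neq0 // scale1r subn0.
have hm : (m <= c <= j)%N by apply/andP; lia.
have [d d0 e] := IH hm.
exists (d * - gam R r j (c - m.+1).+1).
  by rewrite mulf_neq0 // oppr_eq0 gam_neq0 //; lia.
rewrite iterS e (_ : (c - m)%N = (c - m.+1).+1); last lia.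
by rewrite -scalemxAr (@E_L r l hl) ?scalerA //; apply/andP; lia.
Qed.
End Chains.


Lemma scAr n m p (A : 'M[C]_(n, m)) (a : C) (B : 'M[C]_(m, p)) : A *m (a *: B) = a *: (A *m B).
Proof. by rewrite scalemxAr. Qed.

Ltac lin := repeat (first [rewrite mulmxDr | rewrite scAr]).

Ltac evq := repeat match goal with
  | |- context [@eq_op ?T ?x ?y] =>
      first [ rewrite (_ : @eq_op T x y = true); last (apply/eqP; lia)
            | rewrite (_ : @eq_op T x y = false); last (apply/negbTE/eqP; lia) ]
  end.

Section Target.
Variables (r i l : nat) (k : int).
Hypothesis hi : (i + 2 <= r)%N.
Hypothesis hl : (l + 2 <= r)%N.
Variable f : 'M[C]_(r.*2).
Hypothesis hf : is_mor R (Pmod R r i) (tensC R r k (Pmod R r l)) f.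
Local Notation b := (bvec R r.*2).
Local Notation E := (@actE R _ (Pmod R r l)).
Local Notation F := (@actF R _ (Pmod R r l)).
Local Notation v := (f *m b (hI i 0)).
Local Notation eps := (qpow R r (- (k * r%:Z))).
Local Notation itE n w := (iter n (fun x : 'cV[C]_(r.*2) => E *m x) w).
Local Notation itF n w := (iter n (fun x : 'cV[C]_(r.*2) => F *m x) w).

Lemma eps0 : eps != 0.
Proof. by apply: qpow_neq0; lia. Qed.

Lemma iterFW n (w : 'cV[C]_(r.*2)) :
  iter n (fun x : 'cV[C]_(r.*2) => (eps *: F) *m x) w = eps ^+ n *: itF n w.
Proof.
elim: n => [|n IH] /=; first by rewrite expr0 scale1r.
by rewrite IH -scalemxAl -scalemxAr scalerA exprS.
Qed.

Lemma R1 : itE (r - 2 - i).+2 v = 0.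
Proof. exact: (@rel1 r i hi _ f hf). Qed.
Lemma R2 : E *m (F *m (E *m v)) = 0.
Proof.
have : E *m ((eps *: F) *m (E *m v)) = 0 := @rel2 r i hi _ f hf.
rewrite -scalemxAl -scalemxAr => /eqP.
by rewrite scaler_eq0 (negbTE eps0) /= => /eqP.
Qed.
Lemma R3 : itF i.+2 (E *m v) = 0.
Proof.
have : iter i.+2 (fun x : 'cV[C]_(r.*2) => (eps *: F) *m x) (E *m v) = 0 := @rel3 r i hi _ f hf.
rewrite iterFW => /eqP.
by rewrite scaler_eq0 expf_eq0 (negbTE eps0) andbF /= => /eqP.
Qed.
Lemma R4 : F *m (E *m itF i.+1 v) = 0.
Proof.
have : (eps *: F) *m (E *m iter i.+1 (fun x : 'cV[C]_(r.*2) => (eps *: F) *m x) v) = 0 := @rel4 r i hi _ f hf.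
rewrite iterFW -!scalemxAr -scalemxAl scalerA => /eqP.
by rewrite scaler_eq0 mulf_eq0 expf_eq0 (negbTE eps0) andbF /= => /eqP.
Qed.

Ltac kcases := case: (kr_cases k r) => [e|[e|[e|[e|e]]]]; try subst k.

Lemma caseR a c : (a <= r - 2 - l)%N -> v = c *: b (RI l a) ->
  (k * r%:Z + (l%:Z + 2 + 2 * a%:Z) = i%:Z)%R ->
  (a = (r - 2 - l)%N /\ k = -1 /\ l = (r - 2 - i)%N) \/ c = 0.
Proof.
move=> ha ev ew.
have [hlt|hge] := ltnP a (r - 2 - l); last first.
  by left; split; [lia|]; kcases; split; lia.
right; have := R2; rewrite ev -!scalemxAr (@E_R r l hl a hlt).
have h1 : (0 < a.+1 <= r - 2 - l)%N by apply/andP; lia.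
rewrite (@F_R r l hl a.+1 h1) -!scalemxAr (@E_R r l hl a hlt) !scalerA.
move/(@bvec1_eq0 r.*2); rewrite /RI => /(_ _)/eqP.
rewrite !mulf_eq0 oppr_eq0 (negbTE (@gam_neq0 r _ _ _ _ _)) ?orbF; try lia.
by move=> H; apply/eqP; apply: H; lia.
Qed.

Lemma caseHS a x y : (a <= l)%N -> v = x *: b (hI l a) + y *: b (sI l a) ->
  (k * r%:Z + (l%:Z - 2 * a%:Z) = i%:Z)%R ->
  (a = 0%N /\ k = 0 /\ l = i) \/ (x = 0 /\ y = 0).
Proof.
move=> ha ev ew.
case: a ha ev ew => [|a] ha ev ew.
  by left; split => //; kcases; split; lia.
right.
have ha1 : (0 < a.+1 <= l)%N by apply/andP; lia.
have hal : (a < l)%N by lia.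
have Eh := @E_h r l hl a.+1 ha1. have Es := @E_s r l hl a.+1 ha1.
have Fh := @F_h r l hl a hal. have Fs := @F_s r l hl a hal.
have g0 : gam R r l a.+1 != 0 by apply: gam_neq0; lia.
have hp : (a < r.*2)%N by lia.
have x0 : x = 0.
  have := R2; rewrite ev; lin; rewrite Eh Es /=; lin; rewrite Fh Fs; lin; rewrite Eh Es /=.
  move/matrixP/(_ (Ordinal hp) 0); rewrite !mxE /hI /sI /=.
  evq; rewrite /= ?mulr1n ?mulr0n ?mulr0 ?mulr1 ?addr0 ?add0r.
  move=> H; apply: (@mulIf _ (gam R r l a.+1 * gam R r l a.+1)); [by rewrite mulf_neq0 | by rewrite mul0r H].
split => //; move: ev; rewrite x0 scale0r add0r => ev.
have [hle|hgt] := leqP (a + i.+2) l.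
  have := R3; rewrite ev scAr Es iter_lin iter_lin (@iterF_s r l hl a i.+2 hle) !scalerA.
  move/(@bvec1_eq0 r.*2); rewrite /sI => /(_ _)/eqP.
  move/(_ ltac:(lia))/eqP => H; apply: (mulIf g0); by rewrite mul0r.
have hm : ((r - 2 - i).+2 <= a.+1 <= l)%N.
  by apply/andP; split; [kcases; lia | lia].
have := R1; rewrite ev iter_lin; have [d d0 ->] := @iterE_s r l hl a.+1 _ hm.
rewrite scalerA; move/(@bvec1_eq0 r.*2); rewrite /sI => /(_ _)/eqP.
move/(_ ltac:(lia))/eqP => H; apply: (mulIf d0); by rewrite mul0r.
Qed.

Lemma caseL a c : (a <= r - 2 - l)%N -> v = c *: b (LI r l a) ->
  (k * r%:Z - (l%:Z + 2 + 2 * a%:Z) = i%:Z)%R ->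
  (a = 0%N /\ k = 1 /\ l = (r - 2 - i)%N) \/ c = 0.
Proof.
move=> ha ev ew.
case: a ha ev ew => [|a] ha ev ew.
  by left; split => //; kcases; split; lia.
right.
have [hle|hgt] := leqP (a.+1 + i.+1) (r - 2 - l).
  have h1 : (0 < a.+1 + i.+1 <= r - 2 - l)%N by apply/andP; lia.
  have h2 : ((a.+1 + i.+1).-1 < r - 2 - l)%N by lia.
  have g0 : - gam R r (r - 2 - l) (a.+1 + i.+1) != 0 by rewrite oppr_eq0 gam_neq0 //; lia.
  have := R4; rewrite ev iter_lin (@iterF_L r l hl a.+1 i.+1 hle) scAr (@E_L r l hl _ h1).
  rewrite scAr scAr (@F_L r l hl _ h2) !scalerA.
  move/(@bvec1_eq0 r.*2); rewrite /LI => /(_ ltac:(lia)) => H.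
  by apply: (mulIf g0); rewrite mul0r.
have [h2|h2] := leqP (r - 2 - i).+2 a.+1.
  have hm : ((r - 2 - i).+2 <= a.+1 <= r - 2 - l)%N by apply/andP; lia.
  have := R1; rewrite ev iter_lin; have [d d0 ->] := @iterE_L r l hl a.+1 _ hm.
  rewrite scalerA; move/(@bvec1_eq0 r.*2); rewrite /LI => /(_ ltac:(lia)) => H.
  by apply: (mulIf d0); rewrite mul0r.
have hm' : ((r - 2 - i).+2 - a.+2 <= l <= l)%N by apply/andP; split; [kcases; lia | lia].
have hm1 : (a.+1 <= a.+1 <= r - 2 - l)%N by apply/andP; lia.
have := R1; rewrite ev iter_lin (_ : (r - 2 - i).+2 = ((r - 2 - i).+2 - a.+2 + (1 + a.+1))%N); last lia.
rewrite !iterD; have [d1 d10 ->] := @iterE_L r l hl a.+1 _ hm1.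
rewrite subnn /= scAr (@E_L0 r l hl) iter_lin.
have [d2 d20 ->] := @iterE_s r l hl l _ hm'.
rewrite !scalerA; move/(@bvec1_eq0 r.*2); rewrite /sI => /(_ ltac:(lia)) => H.
apply: (mulIf d10); apply: (mulIf d20); by rewrite !mul0r.
Qed.

Lemma Hl_col (w : 'cV[C]_(r.*2)) (q : 'I_(r.*2)) :
  (@actH R _ (Pmod R r l) *m w) q 0 = (wt r l q)%:~R * w q 0.
Proof.
rewrite !mxE (bigD1 q) //= !mxE eqxx mul1r big1 ?addr0 // => x hx; rewrite !mxE.
by case: (eqVneq q x) => [e|_]; [rewrite e eqxx in hx | rewrite !mul0r].
Qed.

Lemma weight (q : 'I_(r.*2)) : v q 0 != 0 -> (k * r%:Z + wt r l q = i%:Z)%R.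
Proof.
move=> vq.
have hH : f *m (@actH R _ (Pmod R r i) *m b (hI i 0)) =
   @actH R _ (tensC R r k (Pmod R r l)) *m v.
  by case: hf => _ _ e _ _; rewrite !mulmxA e.
have h0 : (hI i 0 < r.*2)%N by rewrite /hI; lia.
rewrite (@H_b r i _ h0) scAr in hH.
have ew : wt r i (hI i 0) = i%:Z by rewrite /wt /hI /=; brs; lia.
rewrite ew in hH.
have eH : @actH R _ (tensC R r k (Pmod R r l)) = ((k * r%:Z)%:~R)%:M + @actH R _ (Pmod R r l) by [].
rewrite eH in hH.
move: (f *m b (hI i 0)) hH vq => w hH vq.
move/matrixP/(_ q 0): hH; rewrite mulmxDl mul_scalar_mx [in RHS]mxE Hl_col !mxE.
move=> /eqP; rewrite eq_sym -subr_eq0 -mulrDl -mulrBl mulf_eq0 (negbTE vq) orbF.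
rewrite -intrD -intrB intr_eq0 => /eqP; lia.
Qed.

End Target.


Lemma wt_hs r l (q : nat) : (l + 2 <= r)%N -> (q < 2 * l + 2)%N ->
  wt r l q = (l%:Z - 2 * (if (q < l + 1)%N then q else q - (l + 1))%N%:Z)%R.
Proof. by move=> h1 h2; rewrite /wt; brs. Qed.

Lemma vec_supp2 n (w : 'cV[C]_n) p1 p2 (h1 : (p1 < n)%N) (h2 : (p2 < n)%N) :
  p1 != p2 -> (forall q : 'I_n, w q 0 != 0 -> (q == p1 :> nat) || (q == p2 :> nat)) ->
  w = w (Ordinal h1) 0 *: bvec R n p1 + w (Ordinal h2) 0 *: bvec R n p2.
Proof.
move=> ne hw; apply/matrixP => q j; rewrite (ord1 j) !mxE.
have [e1|n1] := eqVneq (q : nat) p1.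
  have -> : q = Ordinal h1 by apply/val_inj.
  by rewrite /= (negbTE ne) mulr1 mulr0 addr0.
have [e2|n2] := eqVneq (q : nat) p2.
  have -> : q = Ordinal h2 by apply/val_inj.
  by rewrite /= mulr1 mulr0 add0r.
rewrite !mulr0 addr0; apply/eqP; apply: contraT => /hw.
by rewrite (negbTE n1) (negbTE n2).
Qed.

Lemma vec_supp1 n (w : 'cV[C]_n) p1 (h1 : (p1 < n)%N) :
  (forall q : 'I_n, w q 0 != 0 -> (q == p1 :> nat)) ->
  w = w (Ordinal h1) 0 *: bvec R n p1.
Proof.
move=> hw; apply/matrixP => q j; rewrite (ord1 j) !mxE.
have [e1|n1] := eqVneq (q : nat) p1.
  have -> : q = Ordinal h1 by apply/val_inj.
  by rewrite /= mulr1.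
rewrite mulr0; apply/eqP; apply: contraT => /hw.
by rewrite (negbTE n1).
Qed.

Lemma mor_lin n (V W : umod R n) (f g : 'M[C]_n) (a c : C) :
  is_mor R V W f -> is_mor R V W g -> is_mor R V W (a *: f + c *: g).
Proof.
case=> e1 e2 e3 e4 e5 [g1 g2 g3 g4 g5]; split;
by rewrite mulmxDl mulmxDr -!scalemxAl -!scalemxAr ?e1 ?e2 ?e3 ?e4 ?e5 ?g1 ?g2 ?g3 ?g4 ?g5.
Qed.

Lemma mor_det_spec r i W w g : is_mor R (Pmod R r i) W g -> g *m bvec R r.*2 (hI i 0) = w ->
  is_mor R (Pmod R r i) W (mor_det R r i W w) /\ mor_det R r i W w *m bvec R r.*2 (hI i 0) = w.
Proof.
move=> h1 h2; rewrite /mor_det.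
have := @epsilon_spec _ (inhabits (0 : 'M[C]_(r.*2))) (fun g => is_mor R (Pmod R r i) W g /\ g *m bvec R r.*2 (hI i 0) = w).
by apply; exists g.
Qed.

Lemma id_mor r i : is_mor R (Pmod R r i) (tensC R r 0 (Pmod R r i)) 1%:M.
Proof.
rewrite /is_mor /tensC /= mul0r oppr0 /qpow expr0z !scale1r mulr0z.
by rewrite (_ : (0 : C)%:M = 0) ?add0r ?mul1mx ?mulmx1 //; apply/matrixP => p q; rewrite !mxE mul0rn.
Qed.


Lemma mor_scale n (V W : umod R n) (f : 'M[C]_n) (a : C) :
  is_mor R V W f -> is_mor R V W (a *: f).
Proof. by move=> h; have := @mor_lin _ _ _ f f a 0 h h; rewrite scale0r addr0. Qed.

Lemma final_gen r i (hi : (i + 2 <= r)%N) W f (hf : is_mor R (Pmod R r i) W f) w c :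
  f *m bvec R r.*2 (hI i 0) = c *: w -> f = c *: mor_det R r i W w.
Proof.
move=> ev.
have [c0|c0] := eqVneq c 0.
  rewrite c0 scale0r in ev; rewrite c0 scale0r; exact: (@uniq_mor r i hi _ _ hf).
have e1 : (c^-1 *: f) *m bvec R r.*2 (hI i 0) = w.
  by rewrite -scalemxAl ev scalerA mulVf // scale1r.
have [hA eA] := @mor_det_spec r i W w (c^-1 *: f) (@mor_scale _ _ _ _ (c^-1) hf) e1.
apply/eqP; rewrite -subr_eq0; apply/eqP.
have := @mor_lin _ _ _ _ _ 1 (- c) hf hA; rewrite scale1r scaleNr => hD.
apply: (@uniq_mor r i hi _ _ hD).
by rewrite mulmxBl -scalemxAl eA ev subrr.
Qed.

Lemma final1 r i (hi : (i + 2 <= r)%N) f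
  (hf : is_mor R (Pmod R r i) (tensC R r 0 (Pmod R r i)) f) x y :
  f *m bvec R r.*2 (hI i 0) = x *: bvec R r.*2 (hI i 0) + y *: bvec R r.*2 (sI i 0) ->
  f = x *: Imor R r i + y *: xmor R r i.
Proof.
move=> ev.
have [hIm eI] := @mor_det_spec r i _ (bvec R r.*2 (hI i 0)) 1%:M (id_mor r i) (mul1mx _).
rewrite -/(Imor R r i) in hIm eI.
have hD := @mor_lin _ _ _ _ _ 1 (- x) hf hIm; rewrite scale1r scaleNr in hD.
have eD : (f - x *: Imor R r i) *m bvec R r.*2 (hI i 0) = y *: bvec R r.*2 (sI i 0).
  by rewrite mulmxBl -scalemxAl eI ev addrAC subrr add0r.
have := @final_gen r i hi _ _ hD _ _ eD; rewrite -/(xmor R r i) => <-.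
by rewrite addrCA subrr addr0.
Qed.


Lemma main r i l k (f : 'M[C]_(r.*2)) :
  (i + 2 <= r)%N -> (l + 2 <= r)%N ->
  is_mor R (Pmod R r i) (tensC R r k (Pmod R r l)) f -> f != 0 ->
  (exists lam mu : C,
      [/\ k = 0, l = i & f = lam *: Imor R r i + mu *: xmor R r i]) \/
  (exists lam : C,
      [/\ k = 1, l = (r - 2 - i)%N & f = lam *: alpha_plus R r i]) \/
  (exists lam : C,
      [/\ k = -1, l = (r - 2 - i)%N & f = lam *: alpha_minus R r i]).
Proof.
move=> hi hl hf fn0.
have vn0 : f *m bvec R r.*2 (hI i 0) != 0.
  by apply: contra fn0 => /eqP /(@uniq_mor r i hi _ _ hf) ->.
have [p hp] : exists p : 'I_(r.*2), (f *m bvec R r.*2 (hI i 0)) p 0 != 0.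
  case: (pickP (fun p : 'I_(r.*2) => (f *m bvec R r.*2 (hI i 0)) p 0 != 0)) => [p hp|h].
    by exists p.
  case/eqP: vn0; apply/matrixP => q j; rewrite (ord1 j) [RHS]mxE.
  by move: (h q) => /negbFE /eqP.
have wp := @weight r i l k hi hl f hf p hp.
have wq : forall q : 'I_(r.*2), (f *m bvec R r.*2 (hI i 0)) q 0 != 0 -> wt r l q = wt r l p.
  by move=> q hq; have := @weight r i l k hi hl f hf q hq; lia.
have hpn := ltn_ord p.
have [v ev] : exists v, f *m bvec R r.*2 (hI i 0) = v by eexists.
rewrite ev in vn0 hp wq.
have [hp1|hp1] := ltnP p (2 * l + 2).
  pose a := if (p < l + 1)%N then nat_of_ord p else (p - (l + 1))%N.
  have ha : (a <= l)%N by rewrite /a; brs; lia.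
  have wa : wt r l p = (l%:Z - 2 * a%:Z)%R by rewrite wt_hs // /a.
  have h1 : (hI l a < r.*2)%N by rewrite /hI; lia.
  have h2 : (sI l a < r.*2)%N by rewrite /sI; lia.
  have ne : hI l a != sI l a by rewrite /hI /sI; apply/eqP; lia.
  have sup : forall q : 'I_(r.*2), v q 0 != 0 -> (q == hI l a :> nat) || (q == sI l a :> nat).
    move=> q /wq; rewrite wa /hI /sI /a /wt; have := ltn_ord q; brs; lia.
  have vE := @vec_supp2 _ v _ _ h1 h2 ne sup.
  set x := v _ 0 in vE; set y := v _ 0 in vE.
  have := @caseHS r i l k hi hl f hf a x y ha; rewrite ev => /(_ vE).
  rewrite -wa => /(_ wp).
  case=> [[a0 [k0 li]]|[x0 y0]].
    left; subst k l; exists x, y; split => //.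
    by apply: final1 => //; rewrite ev vE a0.
  by case/eqP: vn0; rewrite vE x0 y0 !scale0r addr0.
have [hp2|hp2] := ltnP p (2 * l + 2 + (r - 2 - l) + 1).
  pose a := (p - (2 * l + 2))%N.
  have ha : (a <= r - 2 - l)%N by rewrite /a; lia.
  have wa : wt r l p = (l%:Z + 2 + 2 * a%:Z)%R by rewrite /wt /a; brs; lia.
  have h1 : (RI l a < r.*2)%N by rewrite /RI; lia.
  have sup : forall q : 'I_(r.*2), v q 0 != 0 -> (q == RI l a :> nat).
    move=> q /wq; rewrite wa /RI /a /wt; have := ltn_ord q; brs; lia.
  have vE := @vec_supp1 _ v _ h1 sup.
  set c := v _ 0 in vE.
  have := @caseR r i l k hi hl f hf a c ha; rewrite ev => /(_ vE).
  rewrite -wa => /(_ wp).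
  case=> [[a0 [k0 li]]|c0]; last by case/eqP: vn0; rewrite vE c0 scale0r.
  right; right; subst k l.
  have w00 : (qfact R r i)^-2 != 0 by rewrite invr_eq0 expf_neq0 // qfact_neq0 //; lia.
  exists (c / (qfact R r i)^-2); split => //.
  apply: (@final_gen r i hi _ _ hf).
  by rewrite ev vE scalerA divfK // (_ : a = i) //; lia.
pose a := (p - (2 * l + (r - 2 - l) + 3))%N.
have ha : (a <= r - 2 - l)%N by rewrite /a; lia.
have wa : wt r l p = (- (l%:Z + 2 + 2 * a%:Z))%R by rewrite /wt /a; brs; lia.
have h1 : (LI r l a < r.*2)%N by rewrite /LI; lia.
have sup : forall q : 'I_(r.*2), v q 0 != 0 -> (q == LI r l a :> nat).
  move=> q /wq; rewrite wa /LI /a /wt; have := ltn_ord q; brs; lia.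
have vE := @vec_supp1 _ v _ h1 sup.
set c := v _ 0 in vE.
have := @caseL r i l k hi hl f hf a c ha; rewrite ev => /(_ vE).
have wp' : (k * r%:Z - (l%:Z + 2 + 2 * a%:Z) = i%:Z)%R by lia.
move=> /(_ wp').
case=> [[a0 [k0 li]]|c0]; last by case/eqP: vn0; rewrite vE c0 scale0r.
right; left; subst k l.
exists c; split => //.
apply: (@final_gen r i hi _ _ hf).
by rewrite ev vE a0.
Qed.

End S.

Theorem proposition7p1 (R : realType) (r i l : nat) (k : int)
    (f : 'M[complex R]_(r.*2)) :
  (i + 2 <= r)%N -> (l + 2 <= r)%N ->
  is_mor R (Pmod R r i) (tensC R r k (Pmod R r l)) f -> f != 0 ->
  (exists lam mu : complex R,
      [/\ k = 0, l = i & f = lam *: Imor R r i + mu *: xmor R r i]) \/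
  (exists lam : complex R,
      [/\ k = 1, l = (r - 2 - i)%N & f = lam *: alpha_plus R r i]) \/
  (exists lam : complex R,
      [/\ k = -1, l = (r - 2 - i)%N & f = lam *: alpha_minus R r i]).
Proof. exact: main. Qed.
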